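(* Every topos is strongly amendable.
   Context: A category is amendable if for every morphism $t_L : L \to L'$ there is a factorization $t_L = \beta \circ t_L'$ with $t_L' : L \rightarrowtail L''$ mono and $\beta : L'' \to L'$ such that for every factorization $t_L = \alpha \circ m$ with $m : L \rightarrowtail G_L$ mono and $\alpha : G_L \to L'$ there exists $\alpha' : G_L \to L''$ with $\alpha' \circ m = t_L'$ and $\beta \circ \alpha' = \alpha$. It is strongly amendable if the factorization $(t_L',\beta)$ can be chosen so that moreover, for every such $(m,\alpha)$, the corresponding $\alpha'$ can be chosen so that $L \xleftarrow{1_L} L \xrightarrow{m} G_L$ is a pullback of $L \xrightarrow{t_L'} L'' \xleftarrow{\alpha'} G_L$. *)

(* Defs.v *)
Set Implicit Arguments.
Unset Strict Implicit.

Record Category : Type := {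
  Ob :> Type;
  Hom : Ob -> Ob -> Type;
  idm : forall A : Ob, Hom A A;
  comp : forall A B C : Ob, Hom B C -> Hom A B -> Hom A C;
  comp_assoc : forall (A B C D : Ob) (h : Hom C D) (g : Hom B C) (f : Hom A B),
      comp h (comp g f) = comp (comp h g) f;
  comp_id_l : forall (A B : Ob) (f : Hom A B), comp (idm B) f = f;
  comp_id_r : forall (A B : Ob) (f : Hom A B), comp f (idm A) = f
}.

Arguments Hom {c} _ _.
Arguments idm {c} _.
Arguments comp {c A B C} _ _.

Notation "g \o f" := (comp g f) (at level 40, left associativity).

Section Basics.
Variable C : Category.

Definition mono {A B : C} (m : Hom A B) : Prop :=
  forall (X : C) (f g : Hom X A), m \o f = m \o g -> f = g.

Definition is_pullback {A B Z P : C} (f : Hom A Z) (g : Hom B Z)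
    (p : Hom P A) (q : Hom P B) : Prop :=
  f \o p = g \o q /\
  forall (X : C) (x : Hom X A) (y : Hom X B), f \o x = g \o y ->
    exists! h : Hom X P, p \o h = x /\ q \o h = y.

Definition is_terminal (T : C) : Prop :=
  forall X : C, exists! f : Hom X T, True.

Definition is_product {A B P : C} (p1 : Hom P A) (p2 : Hom P B) : Prop :=
  forall (X : C) (f : Hom X A) (g : Hom X B),
    exists! h : Hom X P, p1 \o h = f /\ p2 \o h = g.

Definition has_finite_limits : Prop :=
  (exists T : C, is_terminal T) /\
  (forall (A B Z : C) (f : Hom A Z) (g : Hom B Z),
     exists (P : C) (p : Hom P A) (q : Hom P B), is_pullback f g p q).

Definition has_binary_products : Prop :=
  forall A B : C, exists (P : C) (p1 : Hom P A) (p2 : Hom P B), is_product p1 p2.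

(** Exponentials: for all B, Z there is an object E with a product
    E x B (projections e1, e2) and an evaluation ev : E x B -> Z such that
    for every product A x B (projections a1, a2) and every f : A x B -> Z
    there is a unique g : A -> E with ev o (g x 1_B) = f. *)
Definition has_exponentials : Prop :=
  forall B Z : C, exists (E P : C) (e1 : Hom P E) (e2 : Hom P B) (ev : Hom P Z),
    is_product e1 e2 /\
    forall (A Q : C) (a1 : Hom Q A) (a2 : Hom Q B), is_product a1 a2 ->
      forall f : Hom Q Z,
        exists! g : Hom A E, exists h : Hom Q P,
          e1 \o h = g \o a1 /\ e2 \o h = a2 /\ ev \o h = f.

Definition cartesian_closed : Prop :=
  (exists T : C, is_terminal T) /\ has_binary_products /\ has_exponentials.

Definition is_subobject_classifier (One Omega : C) (tru : Hom One Omega) : Prop :=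
  is_terminal One /\
  forall (U X : C) (m : Hom U X), mono m ->
    exists! chi : Hom X Omega,
      forall bang : Hom U One, is_pullback chi tru m bang.

Definition is_topos : Prop :=
  has_finite_limits /\ cartesian_closed /\
  exists (One Omega : C) (tru : Hom One Omega), is_subobject_classifier tru.

Definition amendable : Prop :=
  forall (L L' : C) (tL : Hom L L'),
    exists (L'' : C) (tL' : Hom L L'') (beta : Hom L'' L'),
      mono tL' /\ tL = beta \o tL' /\
      forall (GL : C) (m : Hom L GL) (alpha : Hom GL L'),
        mono m -> tL = alpha \o m ->
        exists alpha' : Hom GL L'',
          alpha' \o m = tL' /\ beta \o alpha' = alpha.

Definition strongly_amendable : Prop :=
  forall (L L' : C) (tL : Hom L L'),
    exists (L'' : C) (tL' : Hom L L'') (beta : Hom L'' L'),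
      mono tL' /\ tL = beta \o tL' /\
      forall (GL : C) (m : Hom L GL) (alpha : Hom GL L'),
        mono m -> tL = alpha \o m ->
        exists alpha' : Hom GL L'',
          alpha' \o m = tL' /\ beta \o alpha' = alpha /\
          is_pullback tL' alpha' (idm L) m.

End Basics.

(* Main.v *)
Require Import Defs.

Section Topos.
Variable C : Category.

Lemma cA (A B X D : C) (h : Hom X D) (g : Hom B X) (f : Hom A B) :
  h \o (g \o f) = h \o g \o f.
Proof. apply comp_assoc. Qed.
Lemma cIl (A B : C) (f : Hom A B) : idm B \o f = f.
Proof. apply comp_id_l. Qed.
Lemma cIr (A B : C) (f : Hom A B) : f \o idm A = f.
Proof. apply comp_id_r. Qed.

Arguments cA {A B X D}.
Arguments cIl {A B}.
Arguments cIr {A B}.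

Lemma prod_uniq (A B P : C) (p1 : Hom P A) (p2 : Hom P B) :
  is_product p1 p2 -> forall X (f g : Hom X P),
  p1 \o f = p1 \o g -> p2 \o f = p2 \o g -> f = g.
Proof.
  intros Hp X f g H1 H2.
  destruct (Hp X (p1 \o g) (p2 \o g)) as [h [_ Hu]].
  rewrite <- (Hu f) by auto. apply Hu; auto.
Qed.

Lemma term_uniq (One : C) : is_terminal One -> forall X (f g : Hom X One), f = g.
Proof.
  intros HT X f g. destruct (HT X) as [h [_ Hu]].
  rewrite <- (Hu f I). apply Hu; auto.
Qed.

Variables (One Omega : C) (tru : Hom One Omega).
Hypothesis HOne : is_terminal One.
Hypothesis Hcl : forall (U X : C) (m : Hom U X), mono m ->
    exists! chi : Hom X Omega, forall bang : Hom U One, is_pullback chi tru m bang.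
Hypothesis Hpb : forall (A B Z : C) (f : Hom A Z) (g : Hom B Z),
     exists (P : C) (p : Hom P A) (q : Hom P B), is_pullback f g p q.
Hypothesis Hprod : has_binary_products C.

Lemma chi_ext (Z : C) (c1 c2 : Hom Z Omega) :
  (forall T (w : Hom T Z) (b : Hom T One), c1 \o w = tru \o b <-> c2 \o w = tru \o b) ->
  c1 = c2.
Proof.
  intros Heq.
  destruct (Hpb _ _ _ c1 tru) as [P [p [q [Hc Hu]]]].
  assert (Hm : mono p).
  { intros X f g Hfg.
    destruct (Hu X (p \o g) (q \o g)) as [h [_ Hh]].
    { rewrite cA, Hc, <- cA. reflexivity. }
    rewrite <- (Hh f), <- (Hh g); auto.
    split; auto. apply term_uniq; auto. }
  destruct (Hcl _ _ _ Hm) as [chi [_ Hchi]].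
  assert (E1 : chi = c1).
  { apply Hchi. intros bang. rewrite (term_uniq _ HOne _ bang q). split; auto. }
  assert (E2 : chi = c2).
  { apply Hchi. intros bang. rewrite (term_uniq _ HOne _ bang q). split.
    - apply Heq. exact Hc.
    - intros X x y Hxy. apply Hu. apply Heq. exact Hxy. }
  congruence.
Qed.

Variable L : C.
Variables (E PE : C) (e1 : Hom PE E) (e2 : Hom PE L) (ev : Hom PE Omega).
Hypothesis He : is_product e1 e2.
Hypothesis Hexp : forall (A Q : C) (a1 : Hom Q A) (a2 : Hom Q L), is_product a1 a2 ->
      forall f : Hom Q Omega,
        exists! g : Hom A E, exists h : Hom Q PE,
          e1 \o h = g \o a1 /\ e2 \o h = a2 /\ ev \o h = f.

Definition Qm (X : C) (m : Hom L X) (phi : Hom X E) : Prop :=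
  forall T (x : Hom T X) (y : Hom T L) (u : Hom T PE) (b : Hom T One),
    e1 \o u = phi \o x -> e2 \o u = y -> (ev \o u = tru \o b <-> x = m \o y).
Arguments Qm {X} m phi.

Lemma Q_exists (X : C) (m : Hom L X) : mono m -> exists phi, Qm m phi.
Proof.
  intros Hm.
  destruct (Hprod X L) as [XL [q1 [q2 Hq]]].
  destruct (Hq L m (idm L)) as [k [[Hk1 Hk2] _]].
  assert (Hkm : mono k).
  { intros Y f g Hfg. rewrite <- (cIl f), <- (cIl g), <- Hk2, <- !cA, Hfg.
    reflexivity. }
  destruct (Hcl _ _ _ Hkm) as [chi [Hchi _]].
  destruct (Hexp _ _ _ _ Hq chi) as [psi [[h [Hh1 [Hh2 Hh3]]] _]].
  exists psi. intros T x y u b Hu1 Hu2.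
  destruct (Hq T x y) as [w [[Hw1 Hw2] _]].
  assert (Euw : u = h \o w).
  { apply (prod_uniq _ _ _ _ _ He).
    - rewrite Hu1, cA, Hh1, <- cA, Hw1. reflexivity.
    - rewrite Hu2, cA, Hh2, Hw2. reflexivity. }
  rewrite Euw, cA, Hh3.
  destruct (HOne L) as [bL _].
  destruct (Hchi bL) as [Hc Hpu].
  split.
  - intros H. destruct (Hpu T w b H) as [j [[Hj1 Hj2] _]].
    assert (Ey : y = j). { rewrite <- Hw2, <- Hj1, cA, Hk2, cIl. reflexivity. }
    subst j. rewrite <- Hw1, <- Hj1, cA, Hk1. reflexivity.
  - intros Hx. assert (Ew : w = k \o y).
    { apply (prod_uniq _ _ _ _ _ Hq).
      + rewrite Hw1, cA, Hk1. exact Hx.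
      + rewrite Hw2, cA, Hk2, cIl. reflexivity. }
    rewrite Ew, cA, Hc, <- cA. f_equal. apply term_uniq; auto.
Qed.

Lemma Q_comp (X : C) (m : Hom L X) (phi : Hom X E) :
  mono m -> Qm m phi -> Qm (idm L) (phi \o m).
Proof.
  intros Hm HQ T x y u b Hu1 Hu2. rewrite cIl.
  rewrite <- cA in Hu1. destruct (HQ T (m \o x) y u b Hu1 Hu2) as [I1 I2].
  split; intros H; [apply Hm; auto | apply I2; rewrite H; reflexivity].
Qed.

Lemma Q_uniq (p1 p2 : Hom L E) : Qm (idm L) p1 -> Qm (idm L) p2 -> p1 = p2.
Proof.
  intros H1 H2.
  destruct (Hprod L L) as [LL [c1 [c2 Hc]]].
  destruct (He LL (p1 \o c1) c2) as [h1 [[Ha1 Ha2] _]].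
  destruct (He LL (p2 \o c1) c2) as [h2 [[Hb1 Hb2] _]].
  assert (Eev : ev \o h1 = ev \o h2).
  { apply chi_ext. intros T w b. rewrite <- !cA.
    assert (J1 := H1 T (c1 \o w) (c2 \o w) (h1 \o w) b).
    assert (J2 := H2 T (c1 \o w) (c2 \o w) (h2 \o w) b).
    enough (A1 : e1 \o (h1 \o w) = p1 \o (c1 \o w)).
    enough (A2 : e2 \o (h1 \o w) = c2 \o w).
    enough (A3 : e1 \o (h2 \o w) = p2 \o (c1 \o w)).
    enough (A4 : e2 \o (h2 \o w) = c2 \o w).
    { specialize (J1 A1 A2). specialize (J2 A3 A4). tauto. }
    - rewrite cA, Hb2. reflexivity.
    - rewrite cA, Hb1, cA. reflexivity.
    - rewrite cA, Ha2. reflexivity.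
    - rewrite cA, Ha1, cA. reflexivity. }
  destruct (Hexp _ _ _ _ Hc (ev \o h1)) as [g [_ Hg]].
  rewrite <- (Hg p1), <- (Hg p2); eauto.
Qed.

Lemma Q_key (X : C) (m : Hom L X) (phi sing : Hom X E) (sg : Hom L E) :
  Qm m phi -> Qm (idm L) sg ->
  forall T (x : Hom T X) (y : Hom T L), phi \o x = sg \o y -> x = m \o y.
Proof.
  intros HQ HS T x y Hxy.
  destruct (He T (sg \o y) y) as [u [[Hu1 Hu2] _]].
  destruct (HOne T) as [b _].
  apply (HQ T x y u b); [congruence | exact Hu2 |].
  apply (HS T y y u b Hu1 Hu2). rewrite cIl. reflexivity.
Qed.
End Topos.

Lemma mono_id (C : Category) (L : C) : mono (idm L).
Proof. intros X f g H. rewrite !cIl in H. exact H. Qed.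

Theorem corollary2 : forall C : Category, is_topos C -> strongly_amendable C.
Proof.
  intros C [Hfl [Hcc [One [Omega [tru [HOne Hcl]]]]]] L L' tL.
  destruct Hcc as [_ [Hprod Hexp]]. destruct Hfl as [_ Hpb].
  destruct (Hexp L Omega) as [E [PE [e1 [e2 [ev [He Hex]]]]]].
  pose proof (Q_exists C One Omega tru HOne Hcl Hprod L E PE e1 e2 ev He Hex) as QE.
  pose proof (Q_uniq C One Omega tru HOne Hcl Hpb Hprod L E PE e1 e2 ev He Hex) as QU.
  pose proof (Q_key C One Omega tru HOne L E PE e1 e2 ev He) as QK.
  destruct (QE L (idm L) (mono_id C L)) as [sg Hsg].
  destruct (Hprod E L') as [L2 [r1 [r2 Hr]]].
  destruct (Hr L sg tL) as [t' [[Ht1 Ht2] _]].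
  exists L2, t', r2. split; [|split].
  - intros X f g Hfg.
    assert (H1 : sg \o f = sg \o g) by (rewrite <- Ht1, <- !cA, Hfg; reflexivity).
    rewrite (QK L (idm L) sg sg sg Hsg Hsg X f g H1). apply cIl.
  - symmetry. exact Ht2.
  - intros GL m alpha Hm Halpha.
    destruct (QE GL m Hm) as [psi Hpsi].
    assert (Epm : psi \o m = sg) by (apply QU; [apply Q_comp; auto | exact Hsg]).
    destruct (Hr GL psi alpha) as [a' [[Ha1 Ha2] _]].
    exists a'. split; [|split; [exact Ha2|split]].
    + apply (prod_uniq _ _ _ _ _ _ Hr).
      * rewrite cA, Ha1, Ht1. exact Epm.
      * rewrite cA, Ha2, Ht2. symmetry. exact Halpha.
    + rewrite cIr. apply (prod_uniq _ _ _ _ _ _ Hr).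
      * rewrite cA, Ha1, Ht1, Epm. reflexivity.
      * rewrite cA, Ha2, Ht2, Halpha. reflexivity.
    + intros X x y Hxy.
      assert (H1 : psi \o y = sg \o x).
      { rewrite <- Ha1, <- Ht1, <- !cA, Hxy. reflexivity. }
      pose proof (QK GL m psi psi sg Hpsi Hsg X y x H1) as Ey.
      exists x. split; [split; [apply cIl | symmetry; exact Ey]|].
      intros h [Hh _]. rewrite cIl in Hh. symmetry. exact Hh.
Qed.
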